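(* Let $L>0$. There is no function $\theta\in C^3([-L,L])$, $\theta\not\equiv0$, solving the third-order ODE $$\tfrac13\,\theta=\theta^{3}\bigl(\theta'''+\theta\bigr)\quad\text{on }(-L,L)$$ with $\theta(-L)=\theta(L)=0$.
   Context: This is the profile equation for separable blow-up solutions $u=(T-t)^{-1/3}\theta(x)$ of the nonlinear dispersion equation $u_t=u^3(u_{xxx}+u)$. For a non-vanishing solution one has the identity $-\tfrac{1}{3\theta}=\theta'\theta''-\int(\theta'')^2\,dx+\tfrac12\theta^2$ (up to an additive constant), where $\int(\theta'')^2dx$ denotes an antiderivative. *)

(* Defs.v *)
From Stdlib Require Import Reals.
Open Scope R_scope.

Definition cont_on_closed (f : R -> R) (a b : R) : Prop :=
  forall x, a <= x <= b -> limit1_in f (fun y => a <= y <= b) (f x) x.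

(* solves_profile f a b: f is C^3 on [a,b] -- three times differentiable on
   (a,b) with derivatives f1,f2,f3, and f,f1,f2,f3 extend continuously to
   [a,b] -- and f solves (1/3) f = f^3 (f''' + f) on (a,b). *)
Definition solves_profile (f : R -> R) (a b : R) : Prop :=
  exists f1 f2 f3 : R -> R,
    (forall x, a < x < b ->
       derivable_pt_lim f x (f1 x) /\
       derivable_pt_lim f1 x (f2 x) /\
       derivable_pt_lim f2 x (f3 x)) /\
    cont_on_closed f a b /\ cont_on_closed f1 a b /\
    cont_on_closed f2 a b /\ cont_on_closed f3 a b /\
    (forall x, a < x < b -> / 3 * f x = (f x) ^ 3 * (f3 x + f x)).

(* Main.v *)
Require Import Defs.
From Stdlib Require Import Reals Lra Psatz Classical.
Open Scope R_scope.

Lemma cont_eps (f : R -> R) a b x : cont_on_closed f a b -> a <= x <= b ->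
  forall e, e > 0 -> exists d, d > 0 /\ forall y, a <= y <= b -> Rabs (y - x) < d ->
    Rabs (f y - f x) < e.
Proof.
  intros H Hx e He. destruct (H x Hx e He) as [d [Hd Hd2]].
  exists d; split; [exact Hd|]. intros y Hy Hyx. apply (Hd2 y). split; [exact Hy|exact Hyx].
Qed.

Theorem mainTheorem3 (L : R) (HL : 0 < L) :
  ~ exists theta : R -> R,
      solves_profile theta (- L) L /\
      (exists x, - L <= x <= L /\ theta x <> 0) /\
      theta (- L) = 0 /\ theta L = 0.
Proof.
  intros [th [[f1 [f2 [f3 [Hd [Hc0 [Hc1 [Hc2 [Hc3 Heq]]]]]]]] [[x0 [Hx0 Hnz]] [HmL HpL]]]].
  set (E := fun y => - L <= y <= x0 /\ th y = 0).
  assert (Hb : bound E) by (exists x0; intros y [Hy _]; lra).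
  assert (Hne : exists y, E y) by (exists (-L); split; [lra|exact HmL]).
  destruct (completeness E Hb Hne) as [a [Hub Hlub]].
  assert (HaL : -L <= a) by (apply Hub; split; [lra|exact HmL]).
  assert (Hax : a <= x0) by (apply Hlub; intros y [Hy _]; lra).
  assert (Hai : -L <= a <= L) by lra.
  assert (Hta : th a = 0).
  { destruct (Req_dec (th a) 0) as [h|h]; [exact h|exfalso].
    destruct (cont_eps th _ _ a Hc0 Hai (Rabs (th a)) (Rabs_pos_lt _ h)) as [d [Hd0 Hdd]].
    assert (a <= a - d).
    { apply Hlub. intros y [Hy Hty].
      destruct (Rle_dec y (a - d)) as [l|l]; [exact l|exfalso].
      assert (y <= a) by (apply Hub; split; assumption).
      assert (Rabs (th y - th a) < Rabs (th a)) as Hc.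
      { apply Hdd; [lra|]. rewrite Rabs_left1; lra. }
      rewrite Hty, Rminus_0_l, Rabs_Ropp in Hc. lra. }
    lra. }
  assert (Hax' : a < x0).
  { destruct (Req_dec a x0) as [e|e]; [subst; contradiction|lra]. }
  assert (Hx0L : x0 <> L) by (intro e; subst; contradiction).
  destruct (cont_eps f3 _ _ a Hc3 Hai 1 Rlt_0_1) as [d1 [Hd1 H1]].
  set (M := Rabs (f3 a) + 1).
  assert (HM : 0 < M) by (unfold M; pose proof (Rabs_pos (f3 a)); lra).
  set (eps := / (4 * (M + 1))).
  assert (Heps : 0 < eps) by (unfold eps; apply Rinv_0_lt_compat; lra).
  assert (Heps2 : eps * (4 * (M + 1)) = 1) by (unfold eps; field; lra).
  destruct (cont_eps th _ _ a Hc0 Hai eps Heps) as [d2 [Hd2 H2]].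
  set (x := a + Rmin d1 (Rmin d2 (x0 - a)) / 2).
  assert (Hm1 : Rmin d1 (Rmin d2 (x0 - a)) <= d1) by apply Rmin_l.
  assert (Hm2 : Rmin d1 (Rmin d2 (x0 - a)) <= d2)
    by (eapply Rle_trans; [apply Rmin_r| apply Rmin_l]).
  assert (Hm3 : Rmin d1 (Rmin d2 (x0 - a)) <= x0 - a)
    by (eapply Rle_trans; [apply Rmin_r| apply Rmin_r]).
  assert (Hm0 : 0 < Rmin d1 (Rmin d2 (x0 - a)))
    by (repeat apply Rmin_glb_lt; lra).
  assert (Hxa : a < x < x0) by (unfold x; lra).
  assert (Hxi : -L <= x <= L) by lra.
  assert (Hdx : Rabs (x - a) < d1 /\ Rabs (x - a) < d2)
    by (rewrite Rabs_right; unfold x in *; lra).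
  assert (Htx : th x <> 0).
  { intro h. assert (x <= a) by (apply Hub; split; [lra|exact h]). lra. }
  assert (Hf3 : Rabs (f3 x) < M).
  { pose proof (H1 x Hxi (proj1 Hdx)). unfold M.
    pose proof (Rabs_triang_inv (f3 x) (f3 a)). lra. }
  assert (Hth : Rabs (th x) < eps).
  { pose proof (H2 x Hxi (proj2 Hdx)). rewrite Hta, Rminus_0_r in H. exact H. }
  assert (Hxo : - L < x < L) by lra.
  pose proof (Heq x Hxo) as He.
  set (t := th x) in *. set (s := f3 x) in *.
  assert (He' : / 3 = t ^ 2 * (s + t)).
  { apply (Rmult_eq_reg_l t); [|exact Htx]. rewrite (Rmult_comm t (/3)), He. ring. }
  assert (Ht2 : t ^ 2 <= eps ^ 2).
  { rewrite <- (pow2_abs t). apply pow_incr. split; [apply Rabs_pos|lra]. }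
  assert (Hst : Rabs (s + t) <= M + 1).
  { assert (eps <= 1/4) by (assert (eps * 4 <= 1) by nra; lra).
    pose proof (Rabs_triang s t). lra. }
  assert (Hprod : Rabs (t ^ 2 * (s + t)) <= eps ^ 2 * (M + 1)).
  { rewrite Rabs_mult. rewrite (Rabs_right (t^2)) by (apply Rle_ge; apply pow2_ge_0).
    apply Rmult_le_compat; try assumption; [apply pow2_ge_0|apply Rabs_pos]. }
  rewrite <- He' in Hprod. rewrite Rabs_right in Hprod by (apply Rle_ge, Rlt_le, Rinv_0_lt_compat; lra).
  assert (eps <= 1/4).
  { assert (eps * 4 <= 1) by nra. lra. }
  nra.
Qed.
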